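(* Let $A$ be a basic, connected, non-simple finite-dimensional $\Bbbk$-algebra, $B=A^{\mathrm{op}}$, $E=A\otimes_{\Bbbk}B$. In each of the following cases the $E$-module $M={}_AA_A$ (the regular $A$-$A$-bimodule) is indecomposable, has stable endomorphism algebra isomorphic to $\Bbbk$, and is projective both as an $A$-module and as a $B$-module: (i) the center of $A$ is trivial (i.e. equal to $\Bbbk$); (ii) $\mathrm{char}(\Bbbk)\neq2$ and $A=\Bbbk[x]/(x^2)$; (iii) $\mathrm{char}(\Bbbk)\neq 2$ and $A$ is the path algebra of the quiver with vertices $1,2,\dots,n$ and arrows $\alpha:i\to i+1$ and $\beta:i+1\to i$ for $i=1,\dots,n-1$, modulo the relations $\alpha^2=0$, $\beta^2=0$, $\alpha\beta=\beta\alpha$.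
   Context: $\Bbbk$ is an algebraically closed field. $E$-modules are identified with $A$-$A$-bimodules (the right $A$-action corresponding to the left action of $B=A^{\mathrm{op}}$). ''Projective as an $A$-module'' means projective under restriction to $A\otimes 1\subseteq E$ (left $A$-module), and ''projective as a $B$-module'' means projective under restriction to $1\otimes B$ (right $A$-module). The stable endomorphism algebra of an $E$-module $M$ is $\mathrm{End}_E(M)$ modulo the ideal of endomorphisms factoring through a projective $E$-module (i.e. projective $A$-$A$-bimodule). *)

(* Defs.v *)
From HB Require Import structures.
From mathcomp Require Import all_boot all_order all_algebra.
From mathcomp Require Import falgebra.
Set Implicit Arguments. Unset Strict Implicit. Unset Printing Implicit Defensive.
Import GRing.Theory.
Local Open Scope ring_scope.

Section Modules.
Variables (k : fieldType) (A : falgType k).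

(* E-modules, E = A (x)_k A^op, i.e. A-A-bimodules on which the two induced
   k-actions agree (k central).  The right A-action is the left action of
   B = A^op. *)
Record bimod := Bimod {
  bm_sort : zmodType;
  bm_l : A -> bm_sort -> bm_sort;
  bm_r : bm_sort -> A -> bm_sort;
  bm_lDr : forall a m n, bm_l a (m + n) = bm_l a m + bm_l a n;
  bm_lDl : forall a b m, bm_l (a + b) m = bm_l a m + bm_l b m;
  bm_lM : forall a b m, bm_l (a * b) m = bm_l a (bm_l b m);
  bm_l1 : forall m, bm_l 1 m = m;
  bm_rDl : forall a m n, bm_r (m + n) a = bm_r m a + bm_r n a;
  bm_rDr : forall a b m, bm_r m (a + b) = bm_r m a + bm_r m b;
  bm_rM : forall a b m, bm_r m (a * b) = bm_r (bm_r m a) b;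
  bm_r1 : forall m, bm_r m 1 = m;
  bm_lr : forall a b m, bm_l a (bm_r m b) = bm_r (bm_l a m) b;
  bm_k : forall (c : k) m, bm_l (c%:A) m = bm_r m (c%:A)
}.

Definition is_bhom (M N : bimod) (f : bm_sort M -> bm_sort N) : Prop :=
  [/\ forall m n, f (m + n) = f m + f n,
      forall a m, f (bm_l a m) = bm_l a (f m) &
      forall a m, f (bm_r m a) = bm_r (f m) a].

Definition bm_projective (P : bimod) : Prop :=
  forall (X Y : bimod) (p : bm_sort X -> bm_sort Y) (g : bm_sort P -> bm_sort Y),
    is_bhom p -> (forall y, exists x, p x = y) -> is_bhom g ->
    exists h : bm_sort P -> bm_sort X, is_bhom h /\ forall m, p (h m) = g m.

(* Endomorphisms factoring through a projective E-module: the ideal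
   defining the stable endomorphism algebra. *)
Definition factors_through_proj (M : bimod) (f : bm_sort M -> bm_sort M) : Prop :=
  exists (P : bimod) (g : bm_sort M -> bm_sort P) (h : bm_sort P -> bm_sort M),
    [/\ bm_projective P, is_bhom g, is_bhom h & forall m, f m = h (g m)].

(* The stable endomorphism algebra  End_E(M) / P(M,M)  is isomorphic to k
   (as a k-algebra), i.e. the structure map k -> End_E(M)/P(M,M),
   c |-> class of c.id_M, is bijective: it is onto, and injective
   (equivalently, id_M does not factor through a projective). *)
Definition stable_end_is_k (M : bimod) : Prop :=
  (forall f : bm_sort M -> bm_sort M, is_bhom f ->
     exists c : k, factors_through_proj (fun m => f m - bm_l (c%:A) m))
  /\ ~ factors_through_proj (fun m : bm_sort M => m).

Definition sub_bimod (M : bimod) (U : bm_sort M -> Prop) : Prop :=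
  [/\ U 0, forall m n, U m -> U n -> U (m + n),
      forall a m, U m -> U (bm_l a m) & forall a m, U m -> U (bm_r m a)].

Definition bm_indecomposable (M : bimod) : Prop :=
  (exists m : bm_sort M, m != 0) /\
  forall U W : bm_sort M -> Prop, sub_bimod U -> sub_bimod W ->
    (forall m, exists u w, [/\ U u, W w & m = u + w]) ->
    (forall m, U m -> W m -> m = 0) ->
    (forall m, U m -> m = 0) \/ (forall m, W m -> m = 0).

(* Left A-modules, and right A-modules (= left B-modules, B = A^op). *)
Record lmodA := LmodA {
  lm_sort : zmodType;
  lm_act : A -> lm_sort -> lm_sort;
  lm_Dr : forall a m n, lm_act a (m + n) = lm_act a m + lm_act a n;
  lm_Dl : forall a b m, lm_act (a + b) m = lm_act a m + lm_act b m;
  lm_M : forall a b m, lm_act (a * b) m = lm_act a (lm_act b m);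
  lm_1 : forall m, lm_act 1 m = m
}.

Record rmodA := RmodA {
  rm_sort : zmodType;
  rm_act : rm_sort -> A -> rm_sort;
  rm_Dl : forall a m n, rm_act (m + n) a = rm_act m a + rm_act n a;
  rm_Dr : forall a b m, rm_act m (a + b) = rm_act m a + rm_act m b;
  rm_M : forall a b m, rm_act m (a * b) = rm_act (rm_act m a) b;
  rm_1 : forall m, rm_act m 1 = m
}.

Definition is_lhom (M N : lmodA) (f : lm_sort M -> lm_sort N) : Prop :=
  (forall m n, f (m + n) = f m + f n) /\ (forall a m, f (lm_act a m) = lm_act a (f m)).

Definition is_rhom (M N : rmodA) (f : rm_sort M -> rm_sort N) : Prop :=
  (forall m n, f (m + n) = f m + f n) /\ (forall a m, f (rm_act m a) = rm_act (f m) a).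

Definition lm_projective (P : lmodA) : Prop :=
  forall (X Y : lmodA) (p : lm_sort X -> lm_sort Y) (g : lm_sort P -> lm_sort Y),
    is_lhom p -> (forall y, exists x, p x = y) -> is_lhom g ->
    exists h : lm_sort P -> lm_sort X, is_lhom h /\ forall m, p (h m) = g m.

Definition rm_projective (P : rmodA) : Prop :=
  forall (X Y : rmodA) (p : rm_sort X -> rm_sort Y) (g : rm_sort P -> rm_sort Y),
    is_rhom p -> (forall y, exists x, p x = y) -> is_rhom g ->
    exists h : rm_sort P -> rm_sort X, is_rhom h /\ forall m, p (h m) = g m.

(* Restriction of an E-module to A (x) 1 and to 1 (x) B. *)
Definition res_A (M : bimod) : lmodA :=
  @LmodA (bm_sort M) (@bm_l M) (@bm_lDr M) (@bm_lDl M) (@bm_lM M) (@bm_l1 M).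
Definition res_B (M : bimod) : rmodA :=
  @RmodA (bm_sort M) (@bm_r M) (@bm_rDl M) (@bm_rDr M) (@bm_rM M) (@bm_r1 M).

Lemma reg_k (c : k) (m : A) : c%:A * m = m * c%:A.
Proof. by rewrite mulr_algl mulr_algr. Qed.

Definition regular_bimod : bimod :=
  @Bimod A (fun a m => a * m) (fun m a => m * a)
    (fun a m n => mulrDr a m n) (fun a b m => mulrDl a b m)
    (fun a b m => esym (mulrA a b m)) (fun m => mul1r m)
    (fun a m n => mulrDl m n a) (fun a b m => mulrDr m a b)
    (fun a b m => mulrA m a b) (fun m => mulr1 m)
    (fun a b m => mulrA a m b) reg_k.

Definition jacobson (x : A) : Prop := forall a : A, (1 - a * x) \is a GRing.unit.

Definition is_alg_hom (R : algType k) (f : A -> R) : Prop :=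
  [/\ forall x y, f (x + y) = f x + f y, forall (c : k) x, f (c *: x) = c *: f x,
      forall x y, f (x * y) = f x * f y & f 1 = 1].

(* A is basic: A / rad A is isomorphic to k x ... x k (n copies), i.e. there is
   a surjective k-algebra map A -> k^n (given coordinatewise) with kernel rad A. *)
Definition basic_alg : Prop :=
  exists (n : nat) (phi : 'I_n -> A -> k),
    [/\ forall i, is_alg_hom (phi i : A -> k^o),
        forall v : 'I_n -> k, exists a, forall i, phi i a = v i &
        forall a, (forall i, phi i a = 0) <-> jacobson a].

Definition connected_alg : Prop :=
  forall e : A, (forall a, e * a = a * e) -> e * e = e -> e = 0 \/ e = 1.

Definition twosided_ideal (I : A -> Prop) : Prop :=
  [/\ I 0, forall x y, I x -> I y -> I (x + y),
      forall a x, I x -> I (a * x) & forall a x, I x -> I (x * a)].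

Definition simple_alg : Prop :=
  forall I, twosided_ideal I -> (forall x, I x -> x = 0) \/ I 1.

(* A = k[x]/(x^2): A is presented by one generator x subject to x^2 = 0. *)
Definition is_dual_numbers : Prop :=
  exists x : A, x * x = 0 /\
    forall (R : algType k) (y : R), y * y = 0 ->
      (exists f : A -> R, is_alg_hom f /\ f x = y) /\
      (forall f g : A -> R, is_alg_hom f -> is_alg_hom g -> f x = y -> g x = y ->
         forall a, f a = g a).

(* Relations of kQ/I in an algebra R, Q the quiver with vertices 0..n-1
   (paper: 1..n) and arrows al_i : i -> i+1, be_i : i+1 -> i (i < n-1):
   e_i complete family of orthogonal idempotents, arrows between the right
   vertices (the convention left/right does not matter, the resulting
   algebra being isomorphic to its opposite), and with al = sum al_i,
   be = sum be_i:  al^2 = 0, be^2 = 0, al be = be al. *)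
Definition quiver_rel (n : nat) (R : algType k)
    (e al be : nat -> R) : Prop :=
  [/\ (forall i j, (i < n)%N -> (j < n)%N -> e i * e j = (if i == j then e i else 0)),
      \sum_(i < n) e i = 1,
      (forall i, (i.+1 < n)%N -> al i = e i.+1 * al i * e i /\ be i = e i * be i * e i.+1) &
      let a := \sum_(i < n.-1) al i in let b := \sum_(i < n.-1) be i in
      [/\ a * a = 0, b * b = 0 & a * b = b * a]].

(* A is (isomorphic to) the path algebra of Q modulo the relations, i.e. A is
   presented by these generators and relations (universal property). *)
Definition is_quiver_alg (n : nat) : Prop :=
  exists e al be : nat -> A, quiver_rel n e al be /\
    forall (R : algType k) (e' al' be' : nat -> R), quiver_rel n e' al' be' ->
      (exists f : A -> R, is_alg_hom f /\
         forall i, [/\ ((i < n)%N -> f (e i) = e' i),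
                       ((i.+1 < n)%N -> f (al i) = al' i) &
                       ((i.+1 < n)%N -> f (be i) = be' i)]) /\
      (forall f g : A -> R, is_alg_hom f -> is_alg_hom g ->
         (forall i, (i < n)%N -> f (e i) = g (e i)) ->
         (forall i, (i.+1 < n)%N -> f (al i) = g (al i) /\ f (be i) = g (be i)) ->
         forall a, f a = g a).

End Modules.

(* Main.v *)
Require Import Defs.
From HB Require Import structures.
From mathcomp Require Import all_boot all_order all_algebra.
From mathcomp Require Import falgebra.
From mathcomp Require Import ring zify.
From Stdlib Require Import Classical.
Set Implicit Arguments. Unset Strict Implicit. Unset Printing Implicit Defensive.
Import GRing.Theory.
Local Open Scope ring_scope.

Section Lin.
Variables (k : fieldType) (V W : lmodType k).
Lemma lin0 (f : V -> W) : linear f -> f 0 = 0.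
Proof. move=> lf; have h := lf 1 0 0; rewrite !scale1r addr0 in h.
by apply: (addrI (f 0)); rewrite addr0 -h.
Qed.
Lemma linD (f : V -> W) : linear f -> forall u v, f (u + v) = f u + f v.
Proof. by move=> lf u v; have := lf 1 u v; rewrite !scale1r. Qed.
Lemma linZ (f : V -> W) : linear f -> forall c u, f (c *: u) = c *: f u.
Proof. by move=> lf c u; have h := lf c u 0; rewrite (lin0 lf) !addr0 in h. Qed.
Lemma lin_sum (f : V -> W) I (r : seq I) (P : pred I) (c : I -> k) (v : I -> V) :
  linear f -> f (\sum_(i <- r | P i) c i *: v i) = \sum_(i <- r | P i) c i *: f (v i).
Proof.
move=> lf; elim: r => [|x r IH]; first by rewrite !big_nil lin0.
rewrite !big_cons; case: (P x); last by [].
by rewrite linD // linZ // IH.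
Qed.
End Lin.

Section Tensor.
Variables (k : fieldType) (A : falgType k).
Local Notation d := (\dim (@fullv k A)).
Definition vb : d.-tuple A := vbasis fullv.
Definition cd (i : 'I_d) (a : A) : k := coord vb i a.

Lemma expand (a : A) : a = \sum_i cd i a *: vb`_i.
Proof. exact: coord_vbasis (memvf a). Qed.

Lemma cd_basis i (j : 'I_d) : cd i vb`_j = (j == i)%:R.
Proof. by rewrite /cd /vb coord_free // (basis_free (vbasisP _)). Qed.

Lemma cdD i u v : cd i (u + v) = cd i u + cd i v. Proof. exact: linearD. Qed.
Lemma cdZ i c u : cd i (c *: u) = c * cd i u. Proof. exact: linearZ. Qed.
Lemma cd_sum i I (r : seq I) (P : pred I) (c : I -> k) (v : I -> A) :
  cd i (\sum_(j <- r | P j) c j *: v j) = \sum_(j <- r | P j) c j * cd i (v j).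
Proof. by rewrite /cd linear_sum; apply: eq_bigr => j _; rewrite linearZ. Qed.

Definition lm (a : A) : 'M[k]_d := \matrix_(p, i) cd p (a * vb`_i).
Definition rm (b : A) : 'M[k]_d := \matrix_(j, q) cd q (vb`_j * b).
Definition tens (u v : A) : 'M[k]_d := \matrix_(i, j) (cd i u * cd j v).
Definition Bf (beta : A -> A -> A) (M : 'M[k]_d) : A :=
  \sum_i \sum_j M i j *: beta vb`_i vb`_j.
Definition mu := Bf *%R.

Lemma lm_tens a u v : lm a *m tens u v = tens (a * u) v.
Proof.
apply/matrixP=> p j; rewrite !mxE.
rewrite [u in a * u]expand mulr_sumr.
under [in RHS]eq_bigr do rewrite -scalerAr.
rewrite cd_sum mulr_suml; apply: eq_bigr => i _; rewrite !mxE; ring.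
Qed.

Lemma tens_rm u v b : tens u v *m rm b = tens u (v * b).
Proof.
apply/matrixP=> i q; rewrite !mxE.
rewrite [v in v * b]expand mulr_suml.
under [in RHS]eq_bigr do rewrite -scalerAl.
rewrite cd_sum mulr_sumr; apply: eq_bigr => j _; rewrite !mxE; ring.
Qed.

Lemma lmM a b : lm (a * b) = lm a *m lm b.
Proof.
apply/matrixP=> p i; rewrite !mxE -mulrA [b * _]expand mulr_sumr.
under [in LHS]eq_bigr do rewrite -scalerAr.
by rewrite cd_sum; apply: eq_bigr => q _; rewrite !mxE mulrC.
Qed.

Lemma rmM a b : rm (a * b) = rm a *m rm b.
Proof.
apply/matrixP=> j q; rewrite !mxE mulrA [_ * a]expand mulr_suml.
under [in LHS]eq_bigr do rewrite -scalerAl.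
by rewrite cd_sum; apply: eq_bigr => l _; rewrite !mxE.
Qed.

Lemma lm1 : lm 1 = 1%:M.
Proof. by apply/matrixP=> p i; rewrite !mxE mul1r cd_basis eq_sym. Qed.
Lemma rm1 : rm 1 = 1%:M.
Proof. by apply/matrixP=> p i; rewrite !mxE mulr1 cd_basis. Qed.
Lemma lmD a b : lm (a + b) = lm a + lm b.
Proof. by apply/matrixP=> p i; rewrite !mxE mulrDl cdD. Qed.
Lemma rmD a b : rm (a + b) = rm a + rm b.
Proof. by apply/matrixP=> p i; rewrite !mxE mulrDr cdD. Qed.
Lemma lmZ c a : lm (c *: a) = c *: lm a.
Proof. by apply/matrixP=> p i; rewrite !mxE -scalerAl cdZ. Qed.
Lemma rmZ c a : rm (c *: a) = c *: rm a.
Proof. by apply/matrixP=> p i; rewrite !mxE -scalerAr cdZ. Qed.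
Lemma lm_alg c : lm (c%:A) = c%:M.
Proof. by rewrite lmZ lm1 scalemx1. Qed.
Lemma rm_alg c : rm (c%:A) = c%:M.
Proof. by rewrite rmZ rm1 scalemx1. Qed.

Lemma Bf_lm beta a M : (forall v, linear (beta^~ v)) ->
  Bf beta (lm a *m M) = Bf (fun u v => beta (a * u) v) M.
Proof.
move=> lb; rewrite /Bf.
transitivity (\sum_p \sum_j \sum_i (lm a p i * M i j) *: beta vb`_p vb`_j).
  by apply: eq_bigr => p _; apply: eq_bigr => j _; rewrite !mxE scaler_suml.
transitivity (\sum_i \sum_j \sum_p (lm a p i * M i j) *: beta vb`_p vb`_j).
  under eq_bigr => p _ do rewrite exchange_big.
  rewrite exchange_big; apply: eq_bigr => i _; exact: exchange_big.
apply: eq_bigr => i _; apply: eq_bigr => j _.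
rewrite [a * _]expand (lin_sum _ _ _ _ (lb _)) scaler_sumr.
by apply: eq_bigr => p _; rewrite !mxE scalerA mulrC.
Qed.

Lemma Bf_rm beta b M : (forall u, linear (beta u)) ->
  Bf beta (M *m rm b) = Bf (fun u v => beta u (v * b)) M.
Proof.
move=> lb; rewrite /Bf; apply: eq_bigr => i _.
transitivity (\sum_q \sum_j (M i j * rm b j q) *: beta vb`_i vb`_q).
  by apply: eq_bigr => q _; rewrite !mxE scaler_suml.
rewrite exchange_big; apply: eq_bigr => j _.
rewrite [_ * b]expand (lin_sum _ _ _ _ (lb _)) scaler_sumr.
by apply: eq_bigr => q _; rewrite !mxE scalerA.
Qed.

Lemma BfD beta M N : Bf beta (M + N) = Bf beta M + Bf beta N.
Proof.
rewrite /Bf -big_split; apply: eq_bigr => i _; rewrite -big_split.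
by apply: eq_bigr => j _; rewrite !mxE scalerDl.
Qed.
Lemma BfZ beta c M : Bf beta (c *: M) = c *: Bf beta M.
Proof.
rewrite /Bf scaler_sumr; apply: eq_bigr => i _; rewrite scaler_sumr.
by apply: eq_bigr => j _; rewrite !mxE scalerA.
Qed.

Lemma Bf_tens beta u v : (forall v, linear (beta^~ v)) -> (forall u, linear (beta u)) ->
  Bf beta (tens u v) = beta u v.
Proof.
move=> lb1 lb2; rewrite [in RHS](expand u) (lin_sum _ _ _ _ (lb1 _)).
apply: eq_bigr => i _; rewrite [in RHS](expand v) (lin_sum _ _ _ _ (lb2 _)).
rewrite scaler_sumr; apply: eq_bigr => j _; rewrite !mxE scalerA.
by [].
Qed.

Lemma lin_mull (x : A) : linear (fun u : A => u * x).
Proof. by move=> c u v; rewrite mulrDl scalerAl. Qed.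
Lemma lin_mulr (x : A) : linear (fun u : A => x * u).
Proof. by move=> c u v; rewrite mulrDr scalerAr. Qed.

Lemma mu_lm a M : mu (lm a *m M) = a * mu M.
Proof.
rewrite /mu Bf_lm; last exact: lin_mull.
rewrite /Bf mulr_sumr; apply: eq_bigr => i _; rewrite mulr_sumr.
by apply: eq_bigr => j _; rewrite /= -scalerAr mulrA.
Qed.
Lemma mu_rm b M : mu (M *m rm b) = mu M * b.
Proof.
rewrite /mu Bf_rm; last exact: lin_mulr.
rewrite /Bf mulr_suml; apply: eq_bigr => i _; rewrite mulr_suml.
by apply: eq_bigr => j _; rewrite /= -scalerAl mulrA.
Qed.
Lemma mu_tens u v : mu (tens u v) = u * v.
Proof. by rewrite /mu Bf_tens //; [exact: lin_mull | exact: lin_mulr]. Qed.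

Lemma tensDl u1 u2 v : tens (u1 + u2) v = tens u1 v + tens u2 v.
Proof. by apply/matrixP=> i j; rewrite !mxE cdD mulrDl. Qed.
Lemma tensDr u v1 v2 : tens u (v1 + v2) = tens u v1 + tens u v2.
Proof. by apply/matrixP=> i j; rewrite !mxE cdD mulrDr. Qed.
Lemma tensZl c u v : tens (c *: u) v = c *: tens u v.
Proof. by apply/matrixP=> i j; rewrite !mxE cdZ mulrA. Qed.
Lemma tensZr c u v : tens u (c *: v) = c *: tens u v.
Proof. by apply/matrixP=> i j; rewrite !mxE cdZ mulrCA. Qed.
Lemma tens0l v : tens 0 v = 0.
Proof. by apply/matrixP=> i j; rewrite !mxE /cd linear0 mul0r. Qed.
Lemma tens0r u : tens u 0 = 0.
Proof. by apply/matrixP=> i j; rewrite !mxE /cd linear0 mulr0. Qed.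

Lemma tens_basis (i j : 'I_d) : tens vb`_i vb`_j = delta_mx i j.
Proof. by apply/matrixP=> p q; rewrite !mxE !cd_basis -natrM mulnb !(eq_sym p) !(eq_sym q). Qed.

Lemma mx_expand (M : 'M[k]_d) : M = \sum_i \sum_j M i j *: tens vb`_i vb`_j.
Proof.
rewrite [LHS]matrix_sum_delta; apply: eq_bigr => i _; apply: eq_bigr => j _.
by rewrite tens_basis.
Qed.

End Tensor.

Section BimodFacts.
Variables (k : fieldType) (A : falgType k) (X : bimod A).
Local Notation l := (@bm_l _ _ X).
Local Notation r := (@bm_r _ _ X).

Lemma bm_l0r a : l a 0 = 0.
Proof. by apply: (addrI (l a 0)); rewrite -bm_lDr !addr0. Qed.
Lemma bm_l0l m : l 0 m = 0.
Proof. by apply: (addrI (l 0 m)); rewrite -bm_lDl !addr0. Qed.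
Lemma bm_r0l a : r 0 a = 0.
Proof. by apply: (addrI (r 0 a)); rewrite -bm_rDl !addr0. Qed.
Lemma bm_r0r m : r m 0 = 0.
Proof. by apply: (addrI (r m 0)); rewrite -bm_rDr !addr0. Qed.
Lemma bm_lNr a m : l a (- m) = - l a m.
Proof. by apply: (addrI (l a m)); rewrite -bm_lDr !subrr bm_l0r. Qed.
Lemma bm_lNl a m : l (- a) m = - l a m.
Proof. by apply: (addrI (l a m)); rewrite -bm_lDl !subrr bm_l0l. Qed.
Lemma bm_rNl a m : r (- m) a = - r m a.
Proof. by apply: (addrI (r m a)); rewrite -bm_rDl !subrr bm_r0l. Qed.
Lemma bm_l_suml I (s : seq I) (P : pred I) (F : I -> A) m :
  l (\sum_(i <- s | P i) F i) m = \sum_(i <- s | P i) l (F i) m.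
Proof. by elim/big_rec2: _ => [|i x y _ <-]; rewrite ?bm_l0l ?bm_lDl. Qed.
Lemma bm_l_sumr I (s : seq I) (P : pred I) (F : I -> _) a :
  l a (\sum_(i <- s | P i) F i) = \sum_(i <- s | P i) l a (F i).
Proof. by elim/big_rec2: _ => [|i x y _ <-]; rewrite ?bm_l0r ?bm_lDr. Qed.
Lemma bm_r_sumr I (s : seq I) (P : pred I) (F : I -> A) m :
  r m (\sum_(i <- s | P i) F i) = \sum_(i <- s | P i) r m (F i).
Proof. by elim/big_rec2: _ => [|i x y _ <-]; rewrite ?bm_r0r ?bm_rDr. Qed.
Lemma bm_r_suml I (s : seq I) (P : pred I) (F : I -> _) a :
  r (\sum_(i <- s | P i) F i) a = \sum_(i <- s | P i) r (F i) a.
Proof. by elim/big_rec2: _ => [|i x y _ <-]; rewrite ?bm_r0l ?bm_rDl. Qed.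

Lemma bm_lZ (c : k) u m : l (c *: u) m = l u (l (c%:A) m).
Proof. by rewrite -(mulr_algr c u) bm_lM. Qed.
Lemma bm_rZ (c : k) u m : r m (c *: u) = r (l (c%:A) m) u.
Proof. by rewrite -(mulr_algl c u) bm_rM bm_k. Qed.
End BimodFacts.

Section HomFacts.
Variables (k : fieldType) (A : falgType k) (X Y : bimod A).
Variable (f : bm_sort X -> bm_sort Y).
Hypothesis hf : is_bhom f.
Lemma bhom0 : f 0 = 0.
Proof. by case: hf => hD _ _; apply: (addrI (f 0)); rewrite -hD !addr0. Qed.
Lemma bhom_sum I (s : seq I) (P : pred I) F :
  f (\sum_(i <- s | P i) F i) = \sum_(i <- s | P i) f (F i).
Proof. by case: hf => hD _ _; elim/big_rec2: _ => [|i x y _ <-]; rewrite ?bhom0 ?hD. Qed.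
End HomFacts.

Section Pbim.
Variables (k : fieldType) (A : falgType k).
Local Notation d := (\dim (@fullv k A)).
Local Notation vb := (@vb k A).

Definition Pbim : bimod A :=
  @Bimod k A 'M[k]_d (fun a M => lm a *m M) (fun M b => M *m rm b)
   (fun a M N => mulmxDr (lm a) M N)
   (fun a b M => etrans (congr1 (mulmx^~ M) (lmD a b)) (mulmxDl _ _ M))
   (fun a b M => etrans (congr1 (mulmx^~ M) (lmM a b)) (esym (mulmxA _ _ M)))
   (fun M => etrans (congr1 (mulmx^~ M) (@lm1 k A)) (mul1mx M))
   (fun a M N => mulmxDl M N (rm a))
   (fun a b M => etrans (congr1 (mulmx M) (rmD a b)) (mulmxDr M _ _))
   (fun a b M => etrans (congr1 (mulmx M) (rmM a b)) (mulmxA M _ _))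
   (fun M => etrans (congr1 (mulmx M) (@rm1 k A)) (mulmx1 M))
   (fun a b M => mulmxA (lm a) M (rm b))
   (fun c M => etrans (congr1 (mulmx^~ M) (@lm_alg k A c))
       (etrans (mul_scalar_mx c M) (etrans (esym (mul_mx_scalar c M))
        (congr1 (mulmx M) (esym (@rm_alg k A c)))))).

Definition colv (M : 'M[k]_d) j : A := \sum_i M i j *: vb`_i.

Lemma colv_lm a M j : colv (lm a *m M) j = a * colv M j.
Proof.
rewrite /colv mulr_sumr.
transitivity (\sum_p \sum_i (lm a p i * M i j) *: (vb`_p : A)).
  by apply: eq_bigr => p _; rewrite !mxE scaler_suml.
rewrite exchange_big; apply: eq_bigr => i _.
rewrite -scalerAr [a * _]expand scaler_sumr; apply: eq_bigr => p _.
by rewrite !mxE scalerA mulrC.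
Qed.

Lemma colv_rm b M q : colv (M *m rm b) q = \sum_j rm b j q *: colv M j.
Proof.
rewrite /colv.
transitivity (\sum_i \sum_j (rm b j q * M i j) *: (vb`_i : A)).
  by apply: eq_bigr => i _; rewrite !mxE scaler_suml; apply: eq_bigr => j _; rewrite mulrC.
rewrite exchange_big; apply: eq_bigr => j _; rewrite scaler_sumr.
by apply: eq_bigr => i _; rewrite scalerA.
Qed.

Lemma mx_colv (M : 'M[k]_d) : M = \sum_j tens (colv M j) vb`_j.
Proof.
rewrite [LHS]mx_expand exchange_big; apply: eq_bigr => j _.
rewrite /colv.
elim/big_rec2: _ => [|i x y _ ->]; first by rewrite tens0l.
by rewrite tensDl tensZl.
Qed.

Lemma tens_lr (u v : A) : tens u v = lm u *m tens 1 1 *m rm v.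
Proof. by rewrite lm_tens tens_rm mulr1 mul1r. Qed.

Lemma Pbim_proj : bm_projective Pbim.
Proof.
move=> X Y p g hp ps hg.
have [x0 px0] := ps (g (tens 1 1)).
pose h (M : 'M[k]_d) := \sum_j bm_l (colv M j) (bm_r x0 vb`_j).
exists h; split; first split.
- move=> M N; rewrite /h -big_split /=; apply: eq_bigr => j _.
  rewrite -bm_lDl; congr bm_l; rewrite /colv -big_split; apply: eq_bigr => i _.
  by rewrite mxE scalerDl.
- move=> a M; rewrite /h /= bm_l_sumr; apply: eq_bigr => j _.
  by rewrite colv_lm bm_lM.
- move=> b M; rewrite /h /= bm_r_suml.
  under eq_bigr do rewrite colv_rm bm_l_suml.
  rewrite exchange_big /=; apply: eq_bigr => j _.
  rewrite -bm_lr -bm_rM [_ * b]expand bm_r_sumr bm_l_sumr; apply: eq_bigr => q _.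
  by rewrite mxE bm_lZ bm_rZ bm_lr.
- move=> M; rewrite /h (bhom_sum hp).
  rewrite [in RHS](mx_colv M) (bhom_sum hg); apply: eq_bigr => j _.
  case: hp => _ hpl hpr; case: hg => _ hgl hgr.
  by rewrite hpl hpr px0 -hgr -hgl /= mulmxA -tens_lr.
Qed.

End Pbim.

Section Generic.
Variables (k : fieldType) (A : falgType k).
Local Notation d := (\dim (@fullv k A)).
Local Notation vb := (@vb k A).
Local Notation R := (regular_bimod A).

Lemma reg_lproj : lm_projective (res_A R).
Proof.
move=> X Y p g [pD pl] ps [gD gl].
have [x0 px0] := ps (g 1).
exists (fun a : A => lm_act a x0); split; first split.
- by move=> a b; rewrite /= lm_Dl.
- by move=> a m; rewrite /= lm_M.
- by move=> m; rewrite pl px0 -gl /= mulr1.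
Qed.

Lemma reg_rproj : rm_projective (res_B R).
Proof.
move=> X Y p g [pD pl] ps [gD gl].
have [x0 px0] := ps (g 1).
exists (fun a : A => rm_act x0 a); split; first split.
- by move=> a b; rewrite /= rm_Dr.
- by move=> a m; rewrite /= rm_M.
- by move=> m; rewrite pl px0 -gl /= mul1r.
Qed.

Lemma reg_indec : connected_alg A -> bm_indecomposable R.
Proof.
move=> conn; split; first by exists 1; exact: oner_neq0.
move=> U W [U0 UD Ul Ur] [W0 WD Wl Wr] hsum hcap.
have UN m : U m -> U (- m) by move=> Um; have := Ul (-1) m Um; rewrite /= mulN1r.
have WN m : W m -> W (- m) by move=> Wm; have := Wl (-1) m Wm; rewrite /= mulN1r.
have uniq u1 u2 w1 w2 : U u1 -> U u2 -> W w1 -> W w2 -> u1 + w1 = u2 + w2 -> u1 = u2.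
  move=> U1 U2 W1 W2 e; apply/eqP; rewrite -subr_eq0; apply/eqP/hcap.
    exact: UD (UN _ U2).
  have -> : u1 - u2 = w2 - w1.
    by rewrite -[u1](addrK w1) e addrC !addrA addNr add0r.
  exact: WD (WN _ W1).
have [u [w [Uu Ww e1]]] := hsum 1.
have uc a : a * u = u * a.
  apply: (uniq (a * u) (u * a) (a * w) (w * a)).
  - exact: Ul. - exact: Ur. - exact: Wl. - exact: Wr.
  by rewrite -mulrDr -mulrDl -e1 mulr1 mul1r.
have uw : u * w = 0 by apply: hcap; [exact: Ur | exact: Wl].
have uu : u * u = u.
  have := congr1 (fun x => u * x) e1; rewrite /= mulr1 mulrDr uw addr0.
  by move/esym.
case: (conn u (fun a => esym (uc a)) uu) => [u0|u1].
- left=> m Um; apply: hcap => //.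
  have := congr1 (fun x => m * x) e1; rewrite /= mulr1 mulrDr u0 mulr0 add0r => ->.
  exact: Wl.
- right=> m Wm; apply: hcap => //.
  have w0 : w = 0 by move: e1; rewrite u1 -{1}[1]addr0 => /addrI /esym.
  have := congr1 (fun x => m * x) e1; rewrite /= mulr1 mulrDr w0 mulr0 addr0 => ->.
  exact: Ul.
Qed.

Lemma reg_hom (f : A -> A) : is_bhom (M := R) (N := R) f ->
  (forall m, f m = m * f 1) /\ (forall m, f m = f 1 * m).
Proof.
case=> _ hl hr; split=> m.
- by have := hl m 1; rewrite /= mulr1.
- by have := hr m 1; rewrite /= mul1r.
Qed.

Lemma mu_bhom : is_bhom (M := Pbim A) (N := R) (@mu k A).
Proof.
split.
- by move=> M N; rewrite /mu BfD.
- by move=> a M; rewrite /= mu_lm.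
- by move=> a M; rewrite /= mu_rm.
Qed.

Definition inv_tens (T : 'M[k]_d) := forall a : A, lm a *m T = T *m rm a.

Lemma factor_inv (f : A -> A) (c : k) (T : 'M[k]_d) :
  is_bhom (M := R) (N := R) f -> inv_tens T -> mu T = f 1 - c%:A ->
  factors_through_proj (M := R) (fun m => f m - bm_l (c%:A) m).
Proof.
move=> hf hT muT.
exists (Pbim A), (fun m : A => lm m *m T), (@mu k A); split.
- exact (@Pbim_proj k A).
- split.
  + by move=> m n; rewrite /= lmD mulmxDl.
  + by move=> a m; rewrite /= lmM mulmxA.
  + by move=> a m; rewrite /= lmM -mulmxA hT mulmxA.
- exact mu_bhom.
- move=> m /=; rewrite mu_lm muT mulrBr.
  have -> : m * c%:A = c%:A * m by rewrite mulr_algl mulr_algr.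
  by rewrite [f m](proj1 (reg_hom hf)).
Qed.

End Generic.

Section Sep.
Variables (k : fieldType) (A : falgType k).
Local Notation d := (\dim (@fullv k A)).
Local Notation vb := (@vb k A).
Local Notation R := (regular_bimod A).

Lemma Bf_ext (b1 b2 : A -> A -> A) M : (forall u v, b1 u v = b2 u v) -> Bf b1 M = Bf b2 M.
Proof.
by move=> h; rewrite /Bf; apply: eq_bigr => i _; apply: eq_bigr => j _; rewrite h.
Qed.
Lemma Bf_mull (a : A) beta M : a * Bf beta M = Bf (fun u v => a * beta u v) M.
Proof.
rewrite /Bf mulr_sumr; apply: eq_bigr => i _; rewrite mulr_sumr.
by apply: eq_bigr => j _; rewrite scalerAr.
Qed.
Lemma Bf_mulr (a : A) beta M : Bf beta M * a = Bf (fun u v => beta u v * a) M.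
Proof.
rewrite /Bf mulr_suml; apply: eq_bigr => i _; rewrite mulr_suml.
by apply: eq_bigr => j _; rewrite scalerAl.
Qed.

Lemma mu_surj : forall y : A, exists x, @mu k A x = y.
Proof. by move=> y; exists (tens y 1); rewrite mu_tens mulr1. Qed.

Lemma sep_of_proj : factors_through_proj (M := R) (fun m => m) ->
  exists e : 'M[k]_d, inv_tens e /\ mu e = 1.
Proof.
move=> [P [g0 [h0 [Pp hg0 hh0 e]]]].
have [H [hH muH]] := Pp (Pbim A) R (@mu k A) h0 (@mu_bhom k A) mu_surj hh0.
exists (H (g0 1)); split.
- move=> a; case: hH => _ Hl Hr; case: hg0 => _ gl gr.
  have e1 : H (g0 a) = lm a *m H (g0 1).
    by have := gl a 1; rewrite /= mulr1 => ->; rewrite Hl.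
  have e2 : H (g0 a) = H (g0 1) *m rm a.
    by have := gr a 1; rewrite /= mul1r => ->; rewrite Hr.
  by rewrite -e1 -e2.
- by rewrite muH -e.
Qed.

Variables (n : nat) (phi : 'I_n -> A -> k).
Hypothesis phih : forall i, is_alg_hom (phi i : A -> k^o).
Hypothesis phis : forall v : 'I_n -> k, exists a, forall i, phi i a = v i.
Hypothesis phik : forall a, (forall i, phi i a = 0) <-> jacobson a.

Definition J (a : A) := forall i, phi i a = 0.

Lemma phiD i x y : phi i (x + y) = phi i x + phi i y.
Proof. by case: (phih i). Qed.
Lemma phiZ i c x : phi i (c *: x) = c * phi i x.
Proof. by case: (phih i) => _ h _ _; rewrite h. Qed.
Lemma phiM i x y : phi i (x * y) = phi i x * phi i y.
Proof. by case: (phih i). Qed.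
Lemma phi1 i : phi i 1 = 1.
Proof. by case: (phih i). Qed.
Lemma phi0 i : phi i 0 = 0.
Proof. by rewrite -(scale0r 0) phiZ mul0r. Qed.
Lemma phiN i x : phi i (- x) = - phi i x.
Proof. by rewrite -scaleN1r phiZ mulN1r. Qed.
Lemma phiB i x y : phi i (x - y) = phi i x - phi i y.
Proof. by rewrite phiD phiN. Qed.
Lemma phi_sum i I (s : seq I) (P : pred I) (F : I -> A) :
  phi i (\sum_(j <- s | P j) F j) = \sum_(j <- s | P j) phi i (F j).
Proof. by elim/big_rec2: _ => [|j x y _ <-]; rewrite ?phi0 ?phiD. Qed.

Lemma J0 : J 0. Proof. by move=> i; rewrite phi0. Qed.
Lemma JD x y : J x -> J y -> J (x + y).
Proof. by move=> hx hy i; rewrite phiD hx hy addr0. Qed.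
Lemma JZ c x : J x -> J (c *: x).
Proof. by move=> hx i; rewrite phiZ hx mulr0. Qed.
Lemma JMl x y : J y -> J (x * y).
Proof. by move=> hy i; rewrite phiM hy mulr0. Qed.
Lemma JMr x y : J x -> J (x * y).
Proof. by move=> hx i; rewrite phiM hx mul0r. Qed.
Lemma J_sum I (s : seq I) (P : pred I) (F : I -> A) :
  (forall j, P j -> J (F j)) -> J (\sum_(j <- s | P j) F j).
Proof. by move=> h; apply: big_rec => [|j x Pj Jx]; [exact: J0 | apply: JD => //; exact: h]. Qed.

Lemma idem_exists : exists w : 'I_n -> A, forall i l, phi l (w i) = (l == i)%:R.
Proof.
have /fin_all_exists [w hw] : forall i : 'I_n, exists a, forall l, phi l a = (l == i)%:R.
  by move=> i; apply: phis.
by exists w.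
Qed.

Lemma sum_delta (F : 'I_n -> k) l : \sum_i F i * (l == i)%:R = F l.
Proof.
rewrite (bigD1 l) //= eqxx mulr1 big1 ?addr0 // => i /negPf.
by rewrite eq_sym => ->; rewrite mulr0.
Qed.

Lemma J_zero_of_sep (e : 'M[k]_d) : inv_tens e -> mu e = 1 -> forall a, J a -> a = 0.
Proof.
move=> inve mue.
have [w hw] := idem_exists.
pose pi (a : A) := a - \sum_i phi i a *: w i.
have Jpi a : J (pi a).
  move=> l; rewrite /pi phiB phi_sum.
  under eq_bigr do rewrite phiZ hw.
  by rewrite sum_delta subrr.
have piJ a : J a -> pi a = a.
  move=> Ja; rewrite /pi big1 ?subr0 // => i _; by rewrite Ja scale0r.
have lpi : linear pi.
  move=> c u v; rewrite /pi.
  under eq_bigr do rewrite phiD phiZ scalerDl -scalerA.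
  rewrite big_split /= -scaler_sumr scalerBr.
  by rewrite opprD addrACA.
pose pi' (y : A) := Bf (fun u v => u * pi (v * y)) e.
have lin2 y u : linear (fun v => u * pi (v * y)).
  move=> c v1 v2 /=; rewrite mulrDl -scalerAl lpi mulrDr scalerAr.
  by [].
have pi'M a y : pi' (a * y) = a * pi' y.
  rewrite /pi' Bf_mull.
  rewrite (@Bf_ext (fun u v => a * (u * pi (v * y))) (fun u v => a * u * pi (v * y)));
    last by move=> u v; rewrite mulrA.
  rewrite -(@Bf_lm _ _ (fun u v => u * pi (v * y)) a e); last by move=> v; exact: lin_mull.
  rewrite inve Bf_rm; last by move=> u; exact: lin2.
  by apply: Bf_ext => u v; rewrite mulrA.
have pi'J y : J y -> pi' y = y.
  move=> Jy; rewrite /pi'.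
  rewrite (@Bf_ext _ (fun u v => u * v * y)); last first.
    by move=> u v; rewrite piJ ?mulrA //; exact: JMl.
  by rewrite -Bf_mulr -/(mu e) mue mul1r.
have Jpi' y : J (pi' y).
  apply: J_sum => i _; apply: J_sum => j _; apply: JZ; apply: JMl; exact: Jpi.
pose j0 := pi' 1.
have pj y : pi' y = y * j0 by rewrite -{1}[y]mulr1 pi'M.
have j0i : j0 = j0 * j0 by rewrite -pj pi'J //; exact: Jpi'.
have jac : jacobson j0 by apply/phik; exact: Jpi'.
have u := jac 1; rewrite mul1r in u.
have j00 : j0 = 0.
  apply: (mulrI u); rewrite mulr0 mulrBl mul1r -j0i subrr //.
move=> a Ja; by rewrite -(pi'J a Ja) pj j00 mulr0.
Qed.

Lemma simple_of_J0 : connected_alg A -> (forall a, J a -> a = 0) -> simple_alg A.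
Proof.
move=> conn hJ I [I0 ID Il Ir].
have [w hw] := idem_exists.
have wc i a : w i * a = a * w i.
  apply/eqP; rewrite -subr_eq0; apply/eqP/hJ => l.
  by rewrite phiB !phiM mulrC subrr.
have ww i : w i * w i = w i.
  apply/eqP; rewrite -subr_eq0; apply/eqP/hJ => l.
  by rewrite phiB phiM hw; case: (l == i); rewrite ?mul1r ?mul0r subrr.
have w1 i : w i = 1.
  case: (conn (w i) (wc i) (ww i)) => // w0.
  by have := hw i i; rewrite w0 phi0 eqxx => /eqP; rewrite eq_sym oner_eq0.
have alleq (i l : 'I_n) : l = i.
  have := hw i l; rewrite w1 phi1; case: (eqVneq l i) => // _.
  by rewrite mulr0n => /eqP; rewrite oner_eq0.
case: (classic (exists x, I x /\ x != 0)) => [[x [Ix xn0]]|]; last first.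
  move=> h; left=> x Ix; apply: contra_not_eq (fun xn0 => h (ex_intro _ x (conj Ix xn0))).
  by [].
right.
have [i ci] : exists i, phi i x != 0.
  apply/existsP; apply: contraT; rewrite negb_exists => /forallP h.
  by case/eqP: xn0; apply: hJ => i; apply/eqP; move: (h i); rewrite negbK.
have -> : 1 = (phi i x)^-1 %:A * x.
  apply/eqP; rewrite eq_sym -subr_eq0; apply/eqP/hJ => l.
  rewrite (alleq i l) phiB phiM phi1 -[_%:A]mulr1 mulr_algl phiZ phi1 mulr1.
  by rewrite mulVf // subrr.
exact: Il.
Qed.

End Sep.

Lemma nonproj (k : fieldType) (A : falgType k) :
  basic_alg A -> connected_alg A -> ~ simple_alg A ->
  ~ factors_through_proj (M := regular_bimod A) (fun m => m).
Proof.
move=> [n [phi [phih phis phik]]] conn nsimp fp.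
have [e [inve mue]] := sep_of_proj fp.
apply: nsimp; apply: (simple_of_J0 phih phis conn).
exact: (@J_zero_of_sep k A n phi phih phis phik e inve mue).
Qed.

Section Cases12.
Variables (k : fieldType) (A : falgType k).
Local Notation d := (\dim (@fullv k A)).
Local Notation R := (regular_bimod A).

Lemma mu0 : @mu k A 0 = 0.
Proof. by rewrite /mu /Bf big1 // => i _; rewrite big1 // => j _; rewrite mxE scale0r. Qed.

Lemma inv0 : inv_tens (0 : 'M[k]_d).
Proof. by move=> a; rewrite mulmx0 mul0mx. Qed.

Lemma case_i : ('Z(fullv : {vspace A}) = 1)%VS ->
  forall f : A -> A, is_bhom (M := R) (N := R) f ->
  exists c : k, factors_through_proj (M := R) (fun m => f m - bm_l (c%:A) m).
Proof.
move=> Z1 f hf.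
have zc : f 1 \in ('Z(fullv : {vspace A}))%VS.
  rewrite memv_cap memvf /=; apply/centvP => v _.
  by case: (reg_hom hf) => h1 h2; rewrite -h2 -h1.
rewrite Z1 in zc; have [c hc] := vlineP _ _ zc.
exists c; apply: (factor_inv hf (T := 0)); first exact: inv0.
by rewrite mu0 hc subrr.
Qed.

Lemma vsval_alg (S : {aspace A}) : 1 \in S -> is_alg_hom (fun u : subvs_of S => vsval u).
Proof. by move=> S1; split=> //; apply/eqP; rewrite algid_eq1. Qed.

Lemma comp_alg (R1 : falgType k) (R2 : algType k) (f : A -> R1) (g : R1 -> R2) :
  is_alg_hom f -> is_alg_hom (A := R1) g -> is_alg_hom (fun a => g (f a)).
Proof.
case=> fD fZ fM f1 [gD gZ gM g1]; split.
- by move=> x y; rewrite fD gD.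
- by move=> c x; rewrite fZ gZ.
- by move=> x y; rewrite fM gM.
- by rewrite f1 g1.
Qed.

Lemma two_neq0 : ~~ (2 \in [pchar k]) -> (2%:R : k) != 0.
Proof. by rewrite inE /=. Qed.

Lemma dual_span : is_dual_numbers A ->
  exists x : A, x * x = 0 /\ forall a, a \in (<[1]> + <[x]>)%VS.
Proof.
move=> [x [xx univ]]; exists x; split => //.
pose S := <<(<[x]>)%VS>>%AS.
have xS : x \in S by apply: (subvP (sub_agenv _)); exact: memv_line.
have S1 : 1 \in S by apply: (subvP (sub1_agenv _)); exact: memv_line.
pose y : subvs_of S := vsproj S x.
have yy : y * y = 0 by apply: val_inj; rewrite /= vsprojK // xx.
have [[F [hF Fx]] _] := univ (subvs_of S) y yy.
have [_ uniq] := univ A x xx.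
have idh : is_alg_hom (fun a : A => a) by [].
have Gh := comp_alg hF (vsval_alg S1).
have SV : (agenv <[x]> <= <[1]> + <[x]>)%VS.
  apply: agenv_sub_modl; first exact: addvSl.
  rewrite prodvDr !prodv_line mulr1 xx subv_add addvSr /= -memvE.
  exact: mem0v.
move=> a; have := uniq _ _ Gh idh _ (erefl x) a; rewrite /= Fx vsprojK // => /(_ erefl) <-.
exact: (subvP SV _ (subvsP (F a))).
Qed.

Lemma case_ii : ~~ (2 \in [pchar k]) -> is_dual_numbers A ->
  forall f : A -> A, is_bhom (M := R) (N := R) f ->
  exists c : k, factors_through_proj (M := R) (fun m => f m - bm_l (c%:A) m).
Proof.
move=> ch2 dual f hf; have [x [xx span]] := dual_span dual.
have decomp a : exists p q : k, a = p *: 1 + q *: x.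
  have /memv_addP [u /vlineP [p ->] [v /vlineP [q ->] ->]] := span a.
  by exists p, q.
have [c [c' ef]] := decomp (f 1).
pose S0 : 'M[k]_d := tens x 1 + tens 1 x.
have S0x : lm x *m S0 = S0 *m rm x.
  by rewrite mulmxDr mulmxDl !lm_tens !tens_rm xx mulr1 mul1r tens0l tens0r add0r addr0.
have invS0 : inv_tens S0.
  move=> a; have [p [q ->]] := decomp a.
  rewrite lmD rmD !lmZ !rmZ lm1 rm1 mulmxDl [S0 *m _]mulmxDr -!scalemxAl -!scalemxAr.
  by rewrite mul1mx mulmx1 S0x.
exists c; apply: (factor_inv hf (T := (c' / 2%:R) *: S0)).
- by move=> a; rewrite -scalemxAr -scalemxAl invS0.
- rewrite /mu BfZ BfD -!/(mu _) !mu_tens mulr1 mul1r ef addrAC subrr add0r.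
  by rewrite -mulr2n -scaler_nat scalerA divfK // two_neq0.
Qed.
End Cases12.

Section QRules.
Variables (k : fieldType) (A : falgType k) (n : nat) (e al be : nat -> A).
Hypothesis hq : quiver_rel n e al be.

Definition qa := \sum_(i < n.-1) al i.
Definition qb := \sum_(i < n.-1) be i.
Definition qE m := if (m < n)%N then e m else 0.

Lemma q_eo i j : (i < n)%N -> (j < n)%N -> e i * e j = (if i == j then e i else 0).
Proof. by case: hq => h _ _ _; apply: h. Qed.
Lemma q_sum : \sum_(i < n) qE i = 1.
Proof. by case: hq => _ <- _ _; apply: eq_bigr => i _; rewrite /qE ltn_ord. Qed.
Lemma q_al i : (i.+1 < n)%N -> al i = e i.+1 * al i * e i.
Proof. by case: hq => _ _ h _ => /h [] . Qed.
Lemma q_be i : (i.+1 < n)%N -> be i = e i * be i * e i.+1.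
Proof. by case: hq => _ _ h _ => /h [] . Qed.
Lemma q_aa : qa * qa = 0. Proof. by case: hq => _ _ _ /= []. Qed.
Lemma q_bb : qb * qb = 0. Proof. by case: hq => _ _ _ /= []. Qed.
Lemma q_ab : qb * qa = qa * qb. Proof. by case: hq => _ _ _ /= [_ _ ->]. Qed.

Lemma EE i j : qE i * qE j = if i == j then qE i else 0.
Proof.
rewrite /qE; case: (ltnP i n) => hi; case: (ltnP j n) => hj; rewrite ?mul0r ?mulr0.
- by rewrite q_eo.
- by case: eqP => // eij; move: hj; rewrite -eij leqNgt hi.
- by case: eqP => // eij; move: hi; rewrite eij leqNgt hj.
- by case: eqP.
Qed.

Lemma EEn i j : i != j -> qE i * qE j = 0.
Proof. by rewrite EE => /negPf ->. Qed.
Lemma EEs i : qE i * qE i = qE i.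
Proof. by rewrite EE eqxx. Qed.

Lemma ltpred i : (i < n.-1)%N -> (i.+1 < n)%N.
Proof. by move=> h; lia. Qed.

Lemma alE i m : (i < n.-1)%N -> al i * qE m = if i == m then al i else 0.
Proof.
move=> hi; have hi1 := ltpred hi.
rewrite (q_al hi1) -mulrA; have -> : e i = qE i by rewrite /qE ltnW.
by rewrite EE; case: eqP; rewrite ?mulr0.
Qed.
Lemma Eal i m : (i < n.-1)%N -> qE m.+1 * al i = if i == m then al i else 0.
Proof.
move=> hi; have hi1 := ltpred hi.
rewrite (q_al hi1) !mulrA; have -> : e i.+1 = qE i.+1 by rewrite /qE hi1.
by rewrite EE eqSS eq_sym; case: eqP => [->|]; rewrite ?EEs ?mul0r.
Qed.

Lemma aE m : qa * qE m = qE m.+1 * qa.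
Proof.
rewrite /qa mulr_suml mulr_sumr; apply: eq_bigr => i _.
by rewrite alE // Eal.
Qed.

Lemma E0a : qE 0 * qa = 0.
Proof.
rewrite /qa mulr_sumr big1 // => i _; have hi1 := ltpred (ltn_ord i).
rewrite (q_al hi1) !mulrA; have -> : e i.+1 = qE i.+1 by rewrite /qE hi1.
by rewrite EE /= mul0r mul0r.
Qed.

Lemma beE i m : (i < n.-1)%N -> be i * qE m.+1 = if i == m then be i else 0.
Proof.
move=> hi; have hi1 := ltpred hi.
rewrite (q_be hi1) -mulrA; have -> : e i.+1 = qE i.+1 by rewrite /qE hi1.
by rewrite EE eqSS; case: eqP; rewrite ?mulr0.
Qed.
Lemma Ebe i m : (i < n.-1)%N -> qE m * be i = if i == m then be i else 0.
Proof.
move=> hi; have hi1 := ltpred hi.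
rewrite (q_be hi1) !mulrA; have -> : e i = qE i by rewrite /qE ltnW.
by rewrite EE eq_sym; case: eqP => [->|]; rewrite ?EEs ?mul0r.
Qed.

Lemma Eb m : qE m * qb = qb * qE m.+1.
Proof.
rewrite /qb mulr_suml mulr_sumr; apply: eq_bigr => i _.
by rewrite beE // Ebe.
Qed.

Lemma bE0 : qb * qE 0 = 0.
Proof.
rewrite /qb mulr_suml big1 // => i _; have hi1 := ltpred (ltn_ord i).
rewrite (q_be hi1) -!mulrA; have -> : e i.+1 = qE i.+1 by rewrite /qE hi1.
by rewrite EE /= !mulr0.
Qed.

Lemma Eab m : qE m * (qa * qb) = qa * qb * qE m.
Proof.
case: m => [|m]; first by rewrite mulrA E0a mul0r -mulrA bE0 mulr0.
by rewrite -mulrA -Eb mulrA -aE mulrA.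
Qed.

Lemma al_gen i : (i.+1 < n)%N -> al i = qE i.+1 * qa * qE i.
Proof.
move=> hi; have hi' : (i < n.-1)%N by lia.
rewrite /qa mulr_sumr mulr_suml (bigD1 (Ordinal hi')) //= big1 ?addr0.
  by rewrite Eal // eqxx alE // eqxx.
move=> j /negPf hj; rewrite Eal //.
by case: eqP => [ej|]; [ move: hj; rewrite -(inj_eq val_inj) /= ej eqxx | rewrite mul0r].
Qed.

Lemma be_gen i : (i.+1 < n)%N -> be i = qE i * qb * qE i.+1.
Proof.
move=> hi; have hi' : (i < n.-1)%N by lia.
rewrite /qb mulr_sumr mulr_suml (bigD1 (Ordinal hi')) //= big1 ?addr0.
  by rewrite Ebe // eqxx beE // eqxx.
move=> j /negPf hj; rewrite Ebe //.
by case: eqP => [ej|]; [ move: hj; rewrite -(inj_eq val_inj) /= ej eqxx | rewrite mul0r].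
Qed.

Lemma e_gen i : (i < n)%N -> e i = qE i.
Proof. by move=> hi; rewrite /qE hi. Qed.

End QRules.

Section VS.
Variables (k : fieldType) (A : falgType k).
Lemma mem_addl (u : A) (U V : {vspace A}) : u \in U -> u \in (U + V)%VS.
Proof. exact: (subvP (addvSl U V)). Qed.
Lemma mem_addr (u : A) (U V : {vspace A}) : u \in V -> u \in (U + V)%VS.
Proof. exact: (subvP (addvSr U V)). Qed.
Lemma prodv_suml (I : finType) (P : pred I) (Us : I -> {vspace A}) V :
  ((\sum_(i | P i) Us i) * V = \sum_(i | P i) (Us i * V))%VS.
Proof. by elim/big_rec2: _ => [|i x y _ <-]; rewrite ?prod0v ?prodvDl. Qed.
Lemma prodv_sumr (I : finType) (P : pred I) (Us : I -> {vspace A}) V :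
  (V * (\sum_(i | P i) Us i) = \sum_(i | P i) (V * Us i))%VS.
Proof. by elim/big_rec2: _ => [|i x y _ <-]; rewrite ?prodv0 ?prodvDr. Qed.
Lemma memS_mul (S : {aspace A}) x y : x \in S -> y \in S -> x * y \in S.
Proof. by move=> Sx Sy; have := memv_mul Sx Sy; rewrite prodv_id. Qed.
End VS.

Section QSpan.
Variables (k : fieldType) (A : falgType k) (n : nat) (e al be : nat -> A).
Hypothesis hq : quiver_rel n e al be.
Local Notation E := (qE n e).
Local Notation a := (qa n al).
Local Notation b := (qb n be).

Definition Wm m := (<[E m]> + <[a * E m]> + <[b * E m]> + <[a * b * E m]>)%VS.
Definition qV := (\sum_(m < n) Wm m)%VS.
Definition qU := (\sum_(m < n) <[E m]> + <[a]> + <[b]>)%VS.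

Lemma E_ge m : (n <= m)%N -> E m = 0.
Proof. by rewrite /qE leqNgt => /negPf ->. Qed.

Lemma inW m x : (m < n)%N -> x \in Wm m -> x \in qV.
Proof.
move=> hm; rewrite memvE => h; rewrite memvE.
exact: (subv_trans h (sumv_sup (Ordinal hm) _ (subvv _))).
Qed.

Lemma inV1 m : E m \in qV.
Proof.
case: (ltnP m n) => hm; last by rewrite E_ge // mem0v.
by apply: (inW hm); do 3 apply: mem_addl; exact: memv_line.
Qed.
Lemma inVa m : a * E m \in qV.
Proof.
case: (ltnP m n) => hm; last by rewrite E_ge // mulr0 mem0v.
by apply: (inW hm); do 2 apply: mem_addl; apply: mem_addr; exact: memv_line.
Qed.
Lemma inVb m : b * E m \in qV.
Proof.
case: (ltnP m n) => hm; last by rewrite E_ge // mulr0 mem0v.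
by apply: (inW hm); apply: mem_addl; apply: mem_addr; exact: memv_line.
Qed.
Lemma inVab m : a * b * E m \in qV.
Proof.
case: (ltnP m n) => hm; last by rewrite E_ge // mulr0 mem0v.
by apply: (inW hm); apply: mem_addr; exact: memv_line.
Qed.

Lemma gen_mulV (g : A) : (forall m, g * E m \in qV) -> (forall m, g * (a * E m) \in qV) ->
  (forall m, g * (b * E m) \in qV) -> (forall m, g * (a * b * E m) \in qV) ->
  (<[g]> * qV <= qV)%VS.
Proof.
move=> h1 h2 h3 h4; rewrite /qV prodv_sumr; apply/subv_sumP => m _.
by rewrite /Wm !prodvDr !prodv_line !subv_add -!memvE h1 h2 h3 h4.
Qed.

Lemma U_mulV : (qU * qV <= qV)%VS.
Proof.
rewrite /qU !prodvDl !subv_add; apply/andP; split; first (apply/andP; split).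
- rewrite prodv_suml; apply/subv_sumP => j _; apply: gen_mulV => m.
  + by rewrite (EE hq); case: eqP; rewrite ?inV1 ?mem0v.
  + rewrite (aE hq) mulrA (EE hq); case: eqP => [->|]; last by rewrite mul0r mem0v.
    by rewrite -(aE hq) inVa.
  + case: m => [|m]; first by rewrite (bE0 hq) mulr0 mem0v.
    rewrite -(Eb hq) mulrA (EE hq); case: eqP => [->|]; last by rewrite mul0r mem0v.
    by rewrite (Eb hq) inVb.
  + rewrite -(Eab hq) mulrA (EE hq); case: eqP => [->|]; last by rewrite mul0r mem0v.
    by rewrite (Eab hq) inVab.
- apply: gen_mulV => m.
  + exact: inVa.
  + by rewrite mulrA (q_aa hq) mul0r mem0v.
  + by rewrite mulrA inVab.
  + by rewrite !mulrA (q_aa hq) !mul0r mem0v.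
- apply: gen_mulV => m.
  + exact: inVb.
  + by rewrite mulrA (q_ab hq) inVab.
  + by rewrite mulrA (q_bb hq) mul0r mem0v.
  + by rewrite !mulrA (q_ab hq) -[a * b * b]mulrA (q_bb hq) mulr0 mul0r mem0v.
Qed.

Lemma one_V : 1 \in qV.
Proof. by rewrite -(q_sum hq); apply: rpred_sum => m _; exact: inV1. Qed.

Lemma agenv_V : (agenv qU <= qV)%VS.
Proof. by apply: agenv_sub_modl; [rewrite -memvE; exact: one_V | exact: U_mulV]. Qed.

End QSpan.

Section Transfer.
Variables (k : fieldType) (A : falgType k) (n : nat) (e al be : nat -> A).
Variable (S : {aspace A}).
Hypothesis S1 : 1 \in S.
Hypothesis Se : forall i, (i < n)%N -> e i \in S.
Hypothesis Sal : forall i, (i.+1 < n)%N -> al i \in S.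
Hypothesis Sbe : forall i, (i.+1 < n)%N -> be i \in S.

Lemma val_sum I (r : seq I) (P : pred I) (F : I -> subvs_of S) :
  val (\sum_(i <- r | P i) F i) = \sum_(i <- r | P i) val (F i).
Proof. by elim/big_rec2: _ => [|i x y _ <-]. Qed.

Lemma val1 : val (1 : subvs_of S) = 1.
Proof. by apply/eqP; rewrite algid_eq1. Qed.

Lemma qrel_sub : quiver_rel n e al be ->
  quiver_rel n (fun i => vsproj S (e i)) (fun i => vsproj S (al i)) (fun i => vsproj S (be i)).
Proof.
case=> eo esum albe /= [aa bb ab]; split.
- move=> i j hi hj; apply: val_inj => /=; rewrite !vsprojK ?Se // eo //.
  by case: eqP => _; rewrite /= ?vsprojK ?Se.
- by apply: val_inj; rewrite val_sum val1 -esum; apply: eq_bigr => i _; rewrite /= vsprojK ?Se.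
- move=> i hi; have hi' : (i < n)%N by lia.
  have [e1 e2] := albe i hi.
  by split; apply: val_inj; rewrite /= !vsprojK ?Se ?Sal ?Sbe.
- have va : vsval (\sum_(i < n.-1) vsproj S (al i)) = \sum_(i < n.-1) al i.
    by rewrite val_sum; apply: eq_bigr => i _; rewrite /= vsprojK // Sal //; apply: ltpred.
  have vb : val (\sum_(i < n.-1) vsproj S (be i)) = \sum_(i < n.-1) be i.
    by rewrite val_sum; apply: eq_bigr => i _; rewrite /= vsprojK // Sbe //; apply: ltpred.
  split; apply: val_inj.
  + by rewrite /= va aa.
  + by rewrite /= vb bb.
  + by rewrite /= va vb ab.
Qed.
End Transfer.

Section QUniv.
Variables (k : fieldType) (A : falgType k) (n : nat) (e al be : nat -> A).
Hypothesis hq : quiver_rel n e al be.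
Hypothesis univ : forall (R : algType k) (e' al' be' : nat -> R), quiver_rel n e' al' be' ->
      (exists f : A -> R, is_alg_hom f /\
         forall i, [/\ ((i < n)%N -> f (e i) = e' i),
                       ((i.+1 < n)%N -> f (al i) = al' i) &
                       ((i.+1 < n)%N -> f (be i) = be' i)]) /\
      (forall f g : A -> R, is_alg_hom f -> is_alg_hom g ->
         (forall i, (i < n)%N -> f (e i) = g (e i)) ->
         (forall i, (i.+1 < n)%N -> f (al i) = g (al i) /\ f (be i) = g (be i)) ->
         forall a, f a = g a).
Local Notation E := (qE n e).
Local Notation a := (qa n al).
Local Notation b := (qb n be).

Lemma span_all x : x \in qV n e al be.
Proof.
pose S := <<qU n e al be>>%AS.
have S1 : 1 \in S by apply: (subvP (sub1_agenv _)); exact: memv_line.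
have SU y : y \in qU n e al be -> y \in S by apply: (subvP (sub_agenv _)).
have SE m : E m \in S.
  apply: SU; rewrite /qU; do 2 apply: mem_addl.
  case: (ltnP m n) => hm; last by rewrite E_ge // mem0v.
  apply: (subvP (sumv_sup (Ordinal hm) _ (subvv _))) => //; exact: memv_line.
have Sa : a \in S by apply: SU; apply: mem_addl; apply: mem_addr; exact: memv_line.
have Sb : b \in S by apply: SU; apply: mem_addr; exact: memv_line.
have Se i : (i < n)%N -> e i \in S by move=> hi; rewrite (@e_gen _ _ n e i hi).
have Sal i : (i.+1 < n)%N -> al i \in S.
  by move=> hi; rewrite (al_gen hq hi); apply: memS_mul => //; apply: memS_mul.
have Sbe i : (i.+1 < n)%N -> be i \in S.
  by move=> hi; rewrite (be_gen hq hi); apply: memS_mul => //; apply: memS_mul.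
have hq' := qrel_sub S1 Se Sal Sbe hq.
have [[F [hF Fgen]] _] := univ hq'.
have [_ uniq] := univ hq.
have idh : is_alg_hom (fun y : A => y) by [].
have Gh := comp_alg hF (vsval_alg S1).
have : vsval (F x) = x.
  apply: (uniq _ _ Gh idh).
  - by move=> i hi; have [h1 _ _] := Fgen i; rewrite /= h1 // vsprojK // Se.
  - move=> i hi; have [_ h2 h3] := Fgen i.
    by rewrite /= h2 // h3 // !vsprojK ?Sal ?Sbe.
move=> <-; exact: (subvP (agenv_V hq) _ (subvsP (F x))).
Qed.

End QUniv.

Section InvTens.
Variables (k : fieldType) (A : falgType k).
Local Notation d := (\dim (@fullv k A)).
Lemma inv_add (M N : 'M[k]_d) : inv_tens M -> inv_tens N -> inv_tens (M + N).
Proof. by move=> hM hN y; rewrite mulmxDr mulmxDl hM hN. Qed.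
Lemma inv_scale c (M : 'M[k]_d) : inv_tens M -> inv_tens (c *: M).
Proof. by move=> hM y; rewrite -scalemxAr -scalemxAl hM. Qed.
Lemma inv_opp (M : 'M[k]_d) : inv_tens M -> inv_tens (- M).
Proof. by move=> hM; rewrite -scaleN1r; apply: inv_scale. Qed.
Lemma inv_sum I (r : seq I) (P : pred I) (F : I -> 'M[k]_d) :
  (forall i, P i -> inv_tens (F i)) -> inv_tens (\sum_(i <- r | P i) F i).
Proof.
move=> h; apply: big_rec => [|i x Pi hx]; first by move=> y; rewrite mulmx0 mul0mx.
by apply: inv_add => //; exact: h.
Qed.
Lemma muD (M N : 'M[k]_d) : mu (M + N) = mu M + mu N. Proof. exact: BfD. Qed.
Lemma muZ c (M : 'M[k]_d) : mu (c *: M) = c *: mu M. Proof. exact: BfZ. Qed.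
Lemma muN (M : 'M[k]_d) : mu (- M) = - mu M.
Proof. by rewrite -scaleN1r muZ scaleN1r. Qed.
Lemma mu_sum I (r : seq I) (P : pred I) (F : I -> 'M[k]_d) :
  mu (\sum_(i <- r | P i) F i) = \sum_(i <- r | P i) mu (F i).
Proof. by elim/big_rec2: _ => [|i x y _ <-]; rewrite ?mu0 ?muD. Qed.
Lemma lm0 : lm (0 : A) = 0.
Proof. by rewrite -(scale0r 0) lmZ scale0r. Qed.
Lemma rm0 : rm (0 : A) = 0.
Proof. by rewrite -(scale0r 0) rmZ scale0r. Qed.
End InvTens.

Section Q4.
Variables (k : fieldType) (A : falgType k) (n : nat) (e al be : nat -> A).
Hypothesis hq : quiver_rel n e al be.
Hypothesis hspan : forall x, x \in qV n e al be.
Local Notation E := (qE n e).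
Local Notation a := (qa n al).
Local Notation b := (qb n be).
Local Notation d := (\dim (@fullv k A)).

Lemma V_decomp y : exists x1 x2 x3 x4 : 'I_n -> k,
  y = \sum_(m < n) (x1 m *: E m + x2 m *: (a * E m) + x3 m *: (b * E m) + x4 m *: (a * b * E m)).
Proof.
have /memv_sumP [v_ hv ->] := hspan y.
have /fin_all_exists [t ht] : forall m : 'I_n, exists t : k * k * k * k,
    v_ m = t.1.1.1 *: E m + t.1.1.2 *: (a * E m) + t.1.2 *: (b * E m) + t.2 *: (a * b * E m).
  move=> m; have := hv m isT; rewrite /Wm.
  move=> /memv_addP [u123 /memv_addP [u12 /memv_addP [u1 /vlineP [p1 ->] [u2 /vlineP [p2 ->] ->]]
    [u3 /vlineP [p3 ->] ->]] [u4 /vlineP [p4 ->] ->]].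
  by exists (p1, p2, p3, p4).
exists (fun m => (t m).1.1.1), (fun m => (t m).1.1.2), (fun m => (t m).1.2), (fun m => (t m).2).
by apply: eq_bigr => m _; rewrite ht.
Qed.

Lemma gen_ind (P : A -> Prop) : P 0 -> (forall x y, P x -> P y -> P (x + y)) ->
  (forall c x, P x -> P (c *: x)) -> (forall x y, P x -> P y -> P (x * y)) ->
  (forall m, P (E m)) -> P a -> P b -> forall y, P y.
Proof.
move=> P0 PD PZ PM PE Pa Pb y; have [x1 [x2 [x3 [x4 ->]]]] := V_decomp y.
apply: big_rec => // m x _ Px; apply: (PD) => //.
by apply: (PD); [apply: (PD); [apply: (PD)|]|]; apply: (PZ) => //; do ?apply: (PM).
Qed.

Lemma inv_gen (T : 'M[k]_d) : (forall m, lm (E m) *m T = T *m rm (E m)) ->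
  lm a *m T = T *m rm a -> lm b *m T = T *m rm b -> inv_tens T.
Proof.
move=> hE ha hb; apply: gen_ind => //.
- by rewrite lm0 rm0 mul0mx mulmx0.
- by move=> x y hx hy; rewrite lmD rmD mulmxDl mulmxDr hx hy.
- by move=> c x hx; rewrite lmZ rmZ -scalemxAl -scalemxAr hx.
- by move=> x y hx hy; rewrite lmM rmM -mulmxA hy mulmxA hx mulmxA.
Qed.

Lemma cent_gen (z : A) : (forall m, E m * z = z * E m) -> a * z = z * a -> b * z = z * b ->
  forall y, y * z = z * y.
Proof.
move=> hE ha hb; apply: gen_ind => //.
- by rewrite mul0r mulr0.
- by move=> x y hx hy; rewrite mulrDl mulrDr hx hy.
- by move=> c x hx; rewrite -scalerAl -scalerAr hx.
- by move=> x y hx hy; rewrite -mulrA hy mulrA hx mulrA.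
Qed.

Definition D (f : 'I_n -> k) : A := \sum_(m < n) f m *: E m.

Lemma E_ord_eq (m l : 'I_n) : E m * E l = if m == l then E m else 0.
Proof. by rewrite (EE hq) -(inj_eq val_inj). Qed.

Lemma ED (l : 'I_n) f : E l * D f = f l *: E l.
Proof.
rewrite /D mulr_sumr (bigD1 l) //= -scalerAr (EEs hq) big1 ?addr0 // => m /negPf hm.
by rewrite -scalerAr E_ord_eq eq_sym hm scaler0.
Qed.

Lemma DM f g : D f * D g = D (fun m => f m * g m).
Proof.
rewrite {1}/D mulr_suml /D; apply: eq_bigr => m _.
by rewrite -scalerAl ED scalerA.
Qed.

Lemma D_ext f g : (forall m, f m = g m) -> D f = D g.
Proof. by move=> h; apply: eq_bigr => m _; rewrite h. Qed.

Lemma D1 : D (fun _ => 1) = 1.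
Proof. by rewrite /D -(q_sum hq); apply: eq_bigr => m _; rewrite scale1r. Qed.

Lemma Dc c : D (fun _ => c) = c%:A.
Proof. by rewrite /D -(q_sum hq) scaler_sumr. Qed.

Lemma DB f g : D f - D g = D (fun m => f m - g m).
Proof. by rewrite /D -sumrB; apply: eq_bigr => m _; rewrite scalerBl. Qed.

Lemma DZ c f : c *: D f = D (fun m => c * f m).
Proof. by rewrite /D scaler_sumr; apply: eq_bigr => m _; rewrite scalerA. Qed.

Lemma D_prod I (r : seq I) (P : pred I) (F : I -> 'I_n -> k) :
  \prod_(i <- r | P i) D (F i) = D (fun m => \prod_(i <- r | P i) F i m).
Proof.
elim: r => [|i r IH]; first by rewrite big_nil -D1; apply: D_ext => m; rewrite big_nil.
by rewrite big_cons; case Pi: (P i); rewrite IH ?DM; apply: D_ext => m; rewrite big_cons Pi.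
Qed.

Lemma diag_scalar (conn : connected_alg A) (x : 'I_n -> k) :
  (forall y, D x * y = y * D x) -> exists c : k, D x = c%:A.
Proof.
move=> sc.
have [m0 hm0] : exists m0 : 'I_n, E m0 != 0.
  apply/existsP; apply: contraT; rewrite negb_exists => /forallP h.
  have := q_sum hq; rewrite big1 => [/eqP|m _]; first by rewrite eq_sym oner_eq0.
  by have := h m; rewrite negbK => /eqP.
pose x0 := x m0.
pose F (m : 'I_n) (l : 'I_n) := (x0 - x m)^-1 * (x l - x m).
pose q := \prod_(m < n | x m != x0) D (F m).
have qD : q = D (fun l => \prod_(m < n | x m != x0) F m l) by rewrite /q D_prod.
pose chi (l : 'I_n) := if x l == x0 then 1 else 0 : k.
have qD' : q = D chi.
  rewrite qD; apply: D_ext => l; rewrite /chi; case: eqP => hl.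
    by rewrite big1 // => m hm; rewrite /F hl mulVf // subr_eq0 eq_sym.
  by rewrite (bigD1 l) /=; [rewrite /F subrr mulr0 mul0r | apply/eqP].
move: qD => _; rename qD' into qD.
have Fc m : D (F m) = (x0 - x m)^-1 *: (D x - (x m)%:A).
  by rewrite -Dc DB DZ.
have qc y : q * y = y * q.
  rewrite /q; elim/big_rec: _ => [|m p _ hp]; first by rewrite mul1r mulr1.
  rewrite Fc -mulrA hp !mulrA; congr (_ * p).
  by rewrite -scalerAl -scalerAr mulrBl mulrBr sc mulr_algl mulr_algr.
have qq : q * q = q.
  rewrite qD DM; apply: D_ext => l; rewrite /chi.
  by case: (x l == x0); rewrite ?mulr1 ?mulr0.
case: (conn q qc qq) => q0.
  have := ED m0 chi; rewrite -qD q0 mulr0 /chi eqxx scale1r => h.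
  by move: hm0; rewrite -h eqxx.
exists x0; have -> : D x = D x * q by rewrite q0 mulr1.
rewrite qD DM; transitivity (x0 *: D chi); last by rewrite -qD q0.
rewrite DZ; apply: D_ext => l /=; rewrite /chi.
by case: eqP => [->|]; rewrite ?mulr0.
Qed.

End Q4.

Section Q5.
Variables (k : fieldType) (A : falgType k) (n : nat) (e al be : nat -> A).
Hypothesis hq : quiver_rel n e al be.
Hypothesis hspan : forall x, x \in qV n e al be.
Local Notation E := (qE n e).
Local Notation a := (qa n al).
Local Notation b := (qb n be).
Local Notation d := (\dim (@fullv k A)).
Local Notation c i := (a * b * E i).

Lemma c0 : c 0 = 0.
Proof. by rewrite -mulrA (bE0 hq) mulr0. Qed.
Lemma abEa i : c i * a = 0.
Proof.
case: i => [|i]; first by rewrite -mulrA (E0a hq) mulr0.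
by rewrite -mulrA -(aE hq) -mulrA [b * _]mulrA (q_ab hq) !mulrA (q_aa hq) !mul0r.
Qed.
Lemma abEb i : c i * b = 0.
Proof. by rewrite -mulrA (Eb hq) -[a * b * _]mulrA [b * (b * _)]mulrA (q_bb hq) mul0r !mulr0. Qed.
Lemma aab i : a * c i = 0.
Proof. by rewrite !mulrA (q_aa hq) !mul0r. Qed.
Lemma bab i : b * c i = 0.
Proof. by rewrite !mulrA (q_ab hq) -[a * b * b]mulrA (q_bb hq) mulr0 !mul0r. Qed.
Lemma Ec i : E i * c i = c i.
Proof. by rewrite mulrA (Eab hq) -mulrA (EEs hq). Qed.
Lemma cE i : c i * E i = c i.
Proof. by rewrite -mulrA (EEs hq). Qed.
Lemma Ecj j m : E j * c m = c m * E j.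
Proof.
rewrite mulrA (Eab hq) -!mulrA !(EE hq).
by case: (eqVneq j m) => [->|ne]; rewrite ?eqxx // eq_sym (negPf ne).
Qed.

Lemma tens_E (u v : A) p m : E p * u = u -> v * E p = v ->
  lm (E m) *m tens u v = tens u v *m rm (E m).
Proof.
move=> hu hv; rewrite lm_tens tens_rm.
have -> : E m * u = (E m * E p) * u by rewrite -mulrA hu.
have -> : v * E m = v * (E p * E m) by rewrite mulrA hv.
case: (eqVneq m p) => [->|ne]; first by rewrite (EEs hq) hu hv.
by rewrite !(EEn hq) // ?mul0r ?mulr0 ?tens0l ?tens0r // eq_sym.
Qed.

Definition tt i : 'M[k]_d :=
  tens (c i) (E i) + tens (E i) (c i) + tens (a * E i) (E i * b) + tens (b * E i) (E i * a).

Lemma inv_tt i : inv_tens (tt i).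
Proof.
apply: (inv_gen hspan).
- move=> m; rewrite /tt !mulmxDr !mulmxDl.
  congr (_ + _ + _ + _).
  + by apply: (tens_E (p := i)); [exact: Ec | exact: (EEs hq)].
  + by apply: (tens_E (p := i)); [exact: (EEs hq) | exact: cE].
  + apply: (tens_E (p := i.+1)).
      by rewrite (aE hq) mulrA (EEs hq).
    by rewrite (Eb hq) -mulrA (EEs hq).
  + case: i => [|i]; first by rewrite (bE0 hq) tens0l mulmx0 mul0mx.
    apply: (tens_E (p := i)).
      by rewrite -(Eb hq) mulrA (EEs hq).
    by rewrite -mulrA (aE hq) mulrA (EEs hq).
- rewrite /tt !mulmxDr !mulmxDl !lm_tens !tens_rm.
  rewrite aab abEa [a * (a * _)]mulrA (q_aa hq) mul0r [a * (b * _)]mulrA.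
  rewrite -[E i * b * a]mulrA (q_ab hq) (Eab hq) -[E i * a * a]mulrA (q_aa hq) mulr0.
  by rewrite !tens0l !tens0r !addr0 add0r addrC.
- rewrite /tt !mulmxDr !mulmxDl !lm_tens !tens_rm.
  rewrite bab abEb [b * (b * _)]mulrA (q_bb hq) mul0r [b * (a * _)]mulrA (q_ab hq).
  rewrite -[E i * b * b]mulrA (q_bb hq) mulr0 -[E i * a * b]mulrA (Eab hq).
  by rewrite !tens0l !tens0r !addr0 add0r addrC.
Qed.

Lemma mu_tt i : mu (tt i) = c i + c i + c i.+1 + (if i is i'.+1 then c i' else 0).
Proof.
rewrite /tt !muD !mu_tens cE Ec.
have h3 : a * E i * (E i * b) = c i.+1.
  by rewrite mulrA -[a * E i * E i]mulrA (EEs hq) -[a * E i * b]mulrA (Eb hq) mulrA.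
have h4 : b * E i * (E i * a) = if i is i'.+1 then c i' else 0.
  rewrite mulrA -[b * E i * E i]mulrA (EEs hq) -[b * E i * a]mulrA.
  case: i {h3} => [|i]; first by rewrite (E0a hq) mulr0.
  by rewrite -(aE hq) mulrA (q_ab hq).
by rewrite h3 h4.
Qed.

Lemma exists_T i : exists T : 'M[k]_d, inv_tens T /\ mu T = c i.
Proof.
suff : (exists T : 'M[k]_d, inv_tens T /\ mu T = c i) /\
       (exists T : 'M[k]_d, inv_tens T /\ mu T = c i.+1) by case.
elim: i => [|i [[T1 [h1 m1]] [T2 [h2 m2]]]].
  split; first by exists 0; split; [move=> y; rewrite mulmx0 mul0mx | rewrite mu0 c0].
  exists (tt 0); split; first exact: inv_tt.
  by rewrite mu_tt c0 !add0r addr0.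
split; first by exists T2.
exists (tt i.+1 - (T2 + T2) - T1); split.
  by apply: inv_add; [apply: inv_add; [exact: inv_tt | apply: inv_opp; exact: inv_add] |
    exact: inv_opp].
have mt := mu_tt i.+1; move: (tt i.+1) mt => t mt.
rewrite !muD !muN muD mt m1 m2 /=.
have ab (X Y Z : A) : X + X + Y + Z - (X + X) - Z = Y.
  by rewrite [X + X + Y]addrC [Y + (X + X) + Z]addrAC !addrK.
exact: ab.
Qed.

Definition rho (y : A) := \sum_(l < n) E l * y * E l.

Lemma rho_lin : linear rho.
Proof.
move=> x u v; rewrite /rho scaler_sumr -big_split; apply: eq_bigr => l _ /=.
by rewrite mulrDr mulrDl -scalerAr -scalerAl.
Qed.

Lemma rho_E (m : 'I_n) : rho (E m) = E m.
Proof.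
rewrite /rho (bigD1 m) //= (EEs hq) (EEs hq) big1 ?addr0 // => l hl.
by rewrite (E_ord_eq hq) (negPf hl) mul0r.
Qed.
Lemma rho_aE m : rho (a * E m) = 0.
Proof.
rewrite /rho big1 // => l _; move: (nat_of_ord l) => j.
rewrite -!mulrA (EE hq); case: eqP => [->|]; last by rewrite !mulr0.
by rewrite (aE hq) mulrA (EE hq) (ltn_eqF (ltnSn _)) mul0r.
Qed.
Lemma rho_bE m : rho (b * E m) = 0.
Proof.
rewrite /rho big1 // => l _; move: (nat_of_ord l) => j.
rewrite -!mulrA (EE hq); case: eqP => [->|]; last by rewrite !mulr0.
case: j => [|j]; first by rewrite (bE0 hq) mulr0.
by rewrite -(Eb hq) mulrA (EE hq) eq_sym (ltn_eqF (ltnSn _)) mul0r.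
Qed.
Lemma rho_c (m : 'I_n) : rho (c m) = c m.
Proof.
rewrite /rho (bigD1 m) //= Ec cE big1 ?addr0 // => l hl.
by rewrite Ecj -mulrA (EEs hq) -mulrA (E_ord_eq hq) eq_sym (negPf hl) mulr0.
Qed.
Lemma rho_central z : (forall y, y * z = z * y) -> rho z = z.
Proof.
move=> zc; rewrite /rho.
transitivity (\sum_(l < n) z * E l).
  by apply: eq_bigr => l _; rewrite zc -mulrA (EEs hq).
by rewrite -mulr_sumr (q_sum hq) mulr1.
Qed.

End Q5.

Lemma case_iii (k : fieldType) (A : falgType k) n : connected_alg A -> is_quiver_alg A n ->
  forall f : A -> A, is_bhom (M := regular_bimod A) (N := regular_bimod A) f ->
  exists c : k, factors_through_proj (M := regular_bimod A) (fun m => f m - bm_l (c%:A) m).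
Proof.
move=> conn [e [al [be [hq univ]]]] f hf.
have hspan := span_all hq univ.
pose z := f 1.
have zc y : y * z = z * y by case: (reg_hom hf) => h1 h2; rewrite -h1 -h2.
have [x1 [x2 [x3 [x4 hz]]]] := V_decomp hspan z.
pose r := \sum_(m < n) x4 m *: (qa n al * qb n be * qE n e m).
have rlin := rho_lin n e.
have rho_sum (F : 'I_n -> A) : rho n e (\sum_m F m) = \sum_m rho n e (F m).
  by elim/big_rec2: _ => [|i x y _ <-]; rewrite ?(lin0 rlin) ?(linD rlin).
have zsr : z = D e x1 + r.
  rewrite -(rho_central hq zc) hz rho_sum /D /r -big_split /=; apply eq_bigr => m _ /=.
  rewrite !(linD rlin) !(linZ rlin) (rho_E hq) (rho_aE hq) (rho_bE hq) (rho_c hq).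
  by rewrite !scaler0 !addr0.
have hr g : (forall m, g * (qa n al * qb n be * qE n e m) = (qa n al * qb n be * qE n e m) * g) ->
    g * r = r * g.
  move=> h; rewrite /r; apply: (big_ind (fun x => g * x = x * g)) => [|x y hx hy|m _].
  - by rewrite mulr0 mul0r.
  - by rewrite mulrDr mulrDl hx hy.
  - by rewrite -scalerAr -scalerAl h.
have rc : forall y, y * r = r * y.
  apply: (cent_gen hspan).
  - by move=> m; apply: hr => j; exact: (Ecj hq).
  - by apply: hr => j; rewrite (aab hq) (abEa hq).
  - by apply: hr => j; rewrite (bab hq) (abEb hq).
have Dz : D e x1 = z - r by rewrite zsr addrK.
have sc y : D e x1 * y = y * D e x1.
  by rewrite Dz mulrBl mulrBr -zc rc.
have [c0 hc] := diag_scalar hq conn sc.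
have /fin_all_exists [T hT] : forall m : 'I_n, exists T : 'M[k]_(\dim (@fullv k A)),
    inv_tens T /\ mu T = qa n al * qb n be * qE n e m.
  by move=> m; exact: (exists_T hq).
exists c0; apply: (factor_inv hf (T := \sum_m x4 m *: T m)).
- by apply: inv_sum => m _; apply: inv_scale; case: (hT m).
- rewrite mu_sum -/z -hc Dz opprB addrC subrK /r; apply: eq_bigr => m _.
  by rewrite muZ; case: (hT m) => _ ->.
Qed.

Unset Implicit Arguments.

Theorem lemma29 (k : closedFieldType) (A : falgType k) :
  basic_alg A -> connected_alg A -> ~ simple_alg A ->
  [\/ ('Z(fullv : {vspace A}) = 1)%VS,
      ~~ (2 \in [pchar k]) /\ is_dual_numbers A
    | ~~ (2 \in [pchar k]) /\ exists n : nat, is_quiver_alg A n] ->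
  [/\ bm_indecomposable (regular_bimod A),
      stable_end_is_k (regular_bimod A),
      lm_projective (res_A (regular_bimod A)) &
      rm_projective (res_B (regular_bimod A))].
Proof.
move=> basic conn nsimp cases; split.
- exact: reg_indec.
- split; last exact: nonproj.
  move=> f hf; case: cases => [Z1|[ch2 dual]|[ch2 [n quiv]]].
  + exact: case_i.
  + exact: case_ii.
  + exact: case_iii conn quiv f hf.
- exact: reg_lproj.
- exact: reg_rproj.
Qed.
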